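(* Let $(c,d,r,a,b)\in E$, and let $(\varphi,\psi)\in C^2(\mathbb{R},[0,1]^2)$ be a traveling wave profile of system (S) with speed $c$ connecting $(1,0)$ to $(0,1)$. Then $(\varphi,\psi)$ is componentwise strictly monotonic: for all $\xi_1<\xi_2$, $\varphi(\xi_1)>\varphi(\xi_2)$ and $\psi(\xi_1)<\psi(\xi_2)$.
   Context: Parameters $(d,r,a,b)\in\Pi:=(0,+\infty)^2\times(0,1)\times(1,+\infty)$. System (S): $\partial_tu-\partial_{xx}u=u(1-u-av)$, $\partial_tv-d\partial_{xx}v=rv(1-v-bu)$. A traveling wave profile with speed $c$ connecting $(1,0)$ to $(0,1)$ is $(\varphi,\psi)\in C^2(\mathbb{R},[0,1]^2)$ with $-\varphi''-c\varphi'=\varphi(1-\varphi-a\psi)$, $-d\psi''-c\psi'=r\psi(1-\psi-b\varphi)$, $(\varphi,\psi)(-\infty)=(1,0)$, $(\varphi,\psi)(+\infty)=(0,1)$. $c^{d,r,a,b}_{LLW}$ is the minimal speed of (componentwise monotone) such profiles (the Lewis–Li–Weinberger spreading speed), and $E=\{(c,d,r,a,b):(d,r,a,b)\in\Pi,\ c\ge c^{d,r,a,b}_{LLW}\}$. *)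

(* Defs.v *)
From Stdlib Require Import Reals.
Open Scope R_scope.

Definition lim_pinf (f : R -> R) (l : R) : Prop :=
  forall eps, 0 < eps -> exists M, forall x, M <= x -> Rabs (f x - l) < eps.

Definition lim_minf (f : R -> R) (l : R) : Prop :=
  forall eps, 0 < eps -> exists M, forall x, x <= M -> Rabs (f x - l) < eps.

Definition C2_with (f f1 f2 : R -> R) : Prop :=
  (forall x, derivable_pt_lim f x (f1 x)) /\
  (forall x, derivable_pt_lim f1 x (f2 x)) /\
  continuity f2.

Definition in_Pi (d r a b : R) : Prop :=
  0 < d /\ 0 < r /\ 0 < a < 1 /\ 1 < b.

Definition tw_profile (c d r a b : R) (phi psi : R -> R) : Prop :=
  (forall x, 0 <= phi x <= 1 /\ 0 <= psi x <= 1) /\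
  exists phi1 phi2 psi1 psi2 : R -> R,
    C2_with phi phi1 phi2 /\ C2_with psi psi1 psi2 /\
    (forall x, - phi2 x - c * phi1 x = phi x * (1 - phi x - a * psi x)) /\
    (forall x, - d * psi2 x - c * psi1 x = r * psi x * (1 - psi x - b * phi x)) /\
    lim_minf phi 1 /\ lim_minf psi 0 /\
    lim_pinf phi 0 /\ lim_pinf psi 1.

Definition monotone_tw_profile (c d r a b : R) (phi psi : R -> R) : Prop :=
  tw_profile c d r a b phi psi /\
  (forall x y, x <= y -> phi y <= phi x /\ psi x <= psi y).

Definition is_c_LLW (d r a b m : R) : Prop :=
  (exists phi psi, monotone_tw_profile m d r a b phi psi) /\
  (forall c phi psi, monotone_tw_profile c d r a b phi psi -> m <= c).

Definition in_E (c d r a b : R) : Prop :=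
  in_Pi d r a b /\ exists m, is_c_LLW d r a b m /\ m <= c.

(* Main.v *)
Require Import Defs.
From Stdlib Require Import Reals Lra Psatz Classical.
Open Scope R_scope.


Lemma dcont f x l : derivable_pt_lim f x l -> continuity_pt f x.
Proof. intro H. apply (derivable_continuous_pt f x (exist _ l H)). Qed.

Lemma dpl_val f x l l' : derivable_pt_lim f x l -> l = l' -> derivable_pt_lim f x l'.
Proof. intros H ->; exact H. Qed.

Lemma dpl_mul f g x a b' : derivable_pt_lim f x a -> derivable_pt_lim g x b' ->
  derivable_pt_lim (fun y => f y * g y) x (a * g x + f x * b').
Proof. intros; apply (derivable_pt_lim_mult f g); auto. Qed.

Lemma dpl_add f g x a b' : derivable_pt_lim f x a -> derivable_pt_lim g x b' ->
  derivable_pt_lim (fun y => f y + g y) x (a + b').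
Proof. intros; apply (derivable_pt_lim_plus f g); auto. Qed.

Lemma dpl_sub f g x a b' : derivable_pt_lim f x a -> derivable_pt_lim g x b' ->
  derivable_pt_lim (fun y => f y - g y) x (a - b').
Proof. intros; apply (derivable_pt_lim_minus f g); auto. Qed.

Lemma dpl_opp f x a : derivable_pt_lim f x a -> derivable_pt_lim (fun y => - f y) x (- a).
Proof. intros; apply (derivable_pt_lim_opp f); auto. Qed.

Lemma dpl_shift f f1 t x : (forall y, derivable_pt_lim f y (f1 y)) ->
  derivable_pt_lim (fun y => f (y + t)) x (f1 (x + t)).
Proof.
  intro H.
  assert (H1 : derivable_pt_lim (fun y => y + t) x 1).
  { apply dpl_val with (1 + 0). apply dpl_add. apply derivable_pt_lim_id.
    apply derivable_pt_lim_const. ring. }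
  apply dpl_val with (f1 (x + t) * 1).
  apply (derivable_pt_lim_comp (fun y => y + t) f x 1 (f1 (x+t))); auto.
  ring.
Qed.

Lemma dpl_expK K x : derivable_pt_lim (fun y => exp (K * y)) x (exp (K * x) * K).
Proof.
  assert (H1 : derivable_pt_lim (fun y => K * y) x K).
  { apply dpl_val with (0 * x + K * 1). apply dpl_mul. apply derivable_pt_lim_const.
    apply derivable_pt_lim_id. ring. }
  apply (derivable_pt_lim_comp (fun y => K * y) exp x K); auto.
  apply derivable_pt_lim_exp.
Qed.

Lemma lmax_d0 f l x0 a b : a < x0 < b -> (forall x, a < x < b -> f x <= f x0) ->
  derivable_pt_lim f x0 l -> l = 0.
Proof.
  intros Hab Hm Hd.
  destruct (Rtotal_order l 0) as [Hl|[Hl|Hl]]; auto; exfalso.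
  - destruct (Hd (- l)) as [dl Hdl]; [lra|].
    pose (h := - Rmin (dl/2) ((x0 - a)/2)).
    assert (hp : 0 < Rmin (dl/2) ((x0 - a)/2)).
    { apply Rmin_pos; destruct dl; simpl; lra. }
    assert (hle1 := Rmin_l (dl/2) ((x0 - a)/2)).
    assert (hle2 := Rmin_r (dl/2) ((x0 - a)/2)).
    assert (Hq := Hdl h).
    destruct dl as [dl dlp]; simpl in *.
    assert (Hh0 : h <> 0) by (unfold h; lra).
    assert (Hh1 : Rabs h < dl) by (unfold h; rewrite Rabs_left; lra).
    specialize (Hq Hh0 Hh1).
    apply Rabs_def2 in Hq.
    set (Q := (f (x0 + h) - f x0) / h) in Hq.
    assert (HQ : f (x0 + h) - f x0 = Q * h) by (unfold Q; field; auto).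
    assert (f (x0 + h) <= f x0) by (apply Hm; unfold h; lra).
    assert (h < 0) by (unfold h; lra). nra.
  - destruct (Hd l) as [dl Hdl]; [lra|].
    pose (h := Rmin (dl/2) ((b - x0)/2)).
    assert (hp : 0 < h).
    { apply Rmin_pos; destruct dl; simpl; lra. }
    assert (hle1 := Rmin_l (dl/2) ((b - x0)/2)).
    assert (hle2 := Rmin_r (dl/2) ((b - x0)/2)).
    assert (Hq := Hdl h).
    destruct dl as [dl dlp]; simpl in *.
    assert (Hh0 : h <> 0) by lra.
    assert (Hh1 : Rabs h < dl) by (rewrite Rabs_right; unfold h in *; lra).
    specialize (Hq Hh0 Hh1).
    apply Rabs_def2 in Hq.
    set (Q := (f (x0 + h) - f x0) / h) in Hq.
    assert (HQ : f (x0 + h) - f x0 = Q * h) by (unfold Q; field; auto).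
    assert (f (x0 + h) <= f x0) by (apply Hm; unfold h in *; lra).
    nra.
Qed.

Lemma lmax_d2 f f1 L x0 a b : a < x0 < b -> (forall x, a < x < b -> f x <= f x0) ->
  (forall x, a < x < b -> derivable_pt_lim f x (f1 x)) ->
  derivable_pt_lim f1 x0 L -> f1 x0 = 0 /\ L <= 0.
Proof.
  intros Hab Hm Hd HL.
  assert (H0 : f1 x0 = 0) by (apply (lmax_d0 f _ x0 a b); auto).
  split; auto.
  destruct (Rle_or_lt L 0) as [?|Hl]; auto; exfalso.
  destruct (HL L) as [dl Hdl]; [lra|].
  destruct dl as [dl dlp]; simpl in *.
  pose (h0 := Rmin (dl/2) ((b - x0)/2)).
  assert (hp : 0 < h0) by (apply Rmin_pos; lra).
  assert (hle1 := Rmin_l (dl/2) ((b - x0)/2)).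
  assert (hle2 := Rmin_r (dl/2) ((b - x0)/2)).
  fold h0 in hle1, hle2.
  destruct (MVT_cor2 f f1 x0 (x0 + h0)) as [c [Hc1 Hc2]]; [lra| |].
  { intros y Hy; apply Hd; lra. }
  assert (Hq := Hdl (c - x0)).
  assert (Hh1 : Rabs (c - x0) < dl) by (rewrite Rabs_right; lra).
  specialize (Hq ltac:(lra) Hh1).
  replace (x0 + (c - x0)) with c in Hq by ring.
  rewrite H0 in Hq.
  apply Rabs_def2 in Hq.
  set (Q := (f1 c - 0) / (c - x0)) in Hq.
  assert (HQ : f1 c = Q * (c - x0)) by (unfold Q; field; lra).
  assert (f (x0 + h0) <= f x0) by (apply Hm; lra).
  assert (0 < f1 c) by (rewrite HQ; apply Rmult_lt_0_compat; lra).
  nra.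
Qed.

Lemma lmin_d2 f f1 L x0 a b : a < x0 < b -> (forall x, a < x < b -> f x0 <= f x) ->
  (forall x, a < x < b -> derivable_pt_lim f x (f1 x)) ->
  derivable_pt_lim f1 x0 L -> f1 x0 = 0 /\ 0 <= L.
Proof.
  intros Hab Hm Hd HL.
  destruct (lmax_d2 (fun y => - f y) (fun y => - f1 y) (- L) x0 a b) as [H1 H2]; auto.
  - intros x Hx; specialize (Hm x Hx); lra.
  - intros x Hx; apply dpl_opp; auto.
  - apply dpl_opp; auto.
  - split; lra.
Qed.

Lemma tb c m u w : Rabs c <= m -> 2 * u * (c * w) <= m * (u * u + w * w) /\
  - (m * (u * u + w * w)) <= 2 * u * (c * w).
Proof.
  intro Hc. assert (-m <= c <= m) by (apply Rabs_def2b in Hc || (unfold Rabs in Hc; destruct (Rcase_abs c); lra)).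
  pose proof (Rle_0_sqr (u - w)). pose proof (Rle_0_sqr (u + w)). unfold Rsqr in *.
  split; nra.
Qed.

Definition cbound (M d1 : R) (z1'' z1 z1' z2 z2' : R -> R) :=
  forall x, exists al be ga de, Rabs al <= M /\ Rabs be <= M /\ Rabs ga <= M /\ Rabs de <= M /\
    d1 * z1'' x = al * z1' x + be * z1 x + ga * z2 x + de * z2' x.

Lemma cbound_norm M d1 z1'' z1 z1' z2 z2' : 0 < d1 -> cbound M d1 z1'' z1 z1' z2 z2' ->
  forall x, exists al be ga de, Rabs al <= M / d1 /\ Rabs be <= M / d1 /\ Rabs ga <= M / d1 /\ Rabs de <= M / d1 /\
    z1'' x = al * z1' x + be * z1 x + ga * z2 x + de * z2' x.
Proof.
  intros Hd H x. destruct (H x) as (al & be & ga & de & H1 & H2 & H3 & H4 & H5).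
  exists (al / d1), (be / d1), (ga / d1), (de / d1).
  assert (Hr : forall y, Rabs y <= M -> Rabs (y / d1) <= M / d1).
  { intros y Hy. unfold Rdiv. rewrite Rabs_mult. rewrite (Rabs_right (/ d1)).
    apply Rmult_le_compat_r; auto. left; apply Rinv_0_lt_compat; auto.
    left; apply Rinv_0_lt_compat; auto. }
  repeat split; try apply Hr; auto.
  apply Rmult_eq_reg_l with d1; [|lra]. rewrite H5. field. lra.
Qed.

Lemma Ebound m1 m2 a1 a2 a3 a4 b1 b2 b3 b4 z1 z1' z2 z2' :
  Rabs a1 <= m1 -> Rabs a2 <= m1 -> Rabs a3 <= m1 -> Rabs a4 <= m1 ->
  Rabs b1 <= m2 -> Rabs b2 <= m2 -> Rabs b3 <= m2 -> Rabs b4 <= m2 ->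
  let E := z1 * z1 + z1' * z1' + z2 * z2 + z2' * z2' in
  let E' := 2 * (z1 * z1' + z1' * (a1 * z1' + a2 * z1 + a3 * z2 + a4 * z2')
        + z2 * z2' + z2' * (b1 * z1' + b2 * z1 + b3 * z2 + b4 * z2')) in
  E' <= (2 + 5 * m1 + 5 * m2) * E /\ - ((2 + 5 * m1 + 5 * m2) * E) <= E'.
Proof.
  intros H1 H2 H3 H4 H5 H6 H7 H8 E E'.
  destruct (tb _ _ z1' z1' H1) as [t1 t1'].
  destruct (tb _ _ z1' z1 H2) as [t2 t2'].
  destruct (tb _ _ z1' z2 H3) as [t3 t3'].
  destruct (tb _ _ z1' z2' H4) as [t4 t4'].
  destruct (tb _ _ z2' z1' H5) as [s1 s1'].
  destruct (tb _ _ z2' z1 H6) as [s2 s2'].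
  destruct (tb _ _ z2' z2 H7) as [s3 s3'].
  destruct (tb _ _ z2' z2' H8) as [s4 s4'].
  assert (m1 >= 0) by (pose proof (Rabs_pos a1); lra).
  assert (m2 >= 0) by (pose proof (Rabs_pos b1); lra).
  pose proof (Rle_0_sqr (z1 - z1')). pose proof (Rle_0_sqr (z1 + z1')).
  pose proof (Rle_0_sqr (z2 - z2')). pose proof (Rle_0_sqr (z2 + z2')).
  pose proof (Rle_0_sqr z1). pose proof (Rle_0_sqr z1').
  pose proof (Rle_0_sqr z2). pose proof (Rle_0_sqr z2').
  unfold Rsqr in *. unfold E, E'.
  split; nra.
Qed.

Lemma uniq2 (z1 z1' z1'' z2 z2' z2'' : R -> R) (d1 d2 M x0 : R) :
  0 < d1 -> 0 < d2 ->
  (forall x, derivable_pt_lim z1 x (z1' x)) -> (forall x, derivable_pt_lim z1' x (z1'' x)) ->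
  (forall x, derivable_pt_lim z2 x (z2' x)) -> (forall x, derivable_pt_lim z2' x (z2'' x)) ->
  cbound M d1 z1'' z1 z1' z2 z2' -> cbound M d2 z2'' z1 z1' z2 z2' ->
  z1 x0 = 0 -> z1' x0 = 0 -> z2 x0 = 0 -> z2' x0 = 0 ->
  forall x, z1 x = 0 /\ z2 x = 0.
Proof.
  intros Hd1 Hd2 D1 D1' D2 D2' C1 C2 e1 e2 e3 e4.
  pose proof (cbound_norm _ _ _ _ _ _ _ Hd1 C1) as N1.
  pose proof (cbound_norm _ _ _ _ _ _ _ Hd2 C2) as N2.
  set (K := 2 + 5 * (M / d1) + 5 * (M / d2)).
  set (E := fun x => z1 x * z1 x + z1' x * z1' x + z2 x * z2 x + z2' x * z2' x).
  set (E' := fun x => 2 * (z1 x * z1' x + z1' x * z1'' x + z2 x * z2' x + z2' x * z2'' x)).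
  assert (DE : forall x, derivable_pt_lim E x (E' x)).
  { intro x. unfold E, E'.
    apply dpl_val with ((z1' x * z1 x + z1 x * z1' x) + (z1'' x * z1' x + z1' x * z1'' x)
       + (z2' x * z2 x + z2 x * z2' x) + (z2'' x * z2' x + z2' x * z2'' x)).
    repeat apply dpl_add; apply dpl_mul; auto. ring. }
  assert (KB : forall x, E' x <= K * E x /\ - (K * E x) <= E' x).
  { intro x. destruct (N1 x) as (a1 & a2 & a3 & a4 & h1 & h2 & h3 & h4 & q1).
    destruct (N2 x) as (b1 & b2 & b3 & b4 & g1 & g2 & g3 & g4 & q2).
    unfold E, E', K. rewrite q1, q2.
    pose proof (Ebound _ _ _ _ _ _ _ _ _ _ (z1 x) (z1' x) (z2 x) (z2' x) h1 h2 h3 h4 g1 g2 g3 g4) as HH.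
    cbv zeta in HH. split; lra. }
  assert (Epos : forall x, 0 <= E x).
  { intro x; unfold E. pose proof (Rle_0_sqr (z1 x)). pose proof (Rle_0_sqr (z1' x)).
    pose proof (Rle_0_sqr (z2 x)). pose proof (Rle_0_sqr (z2' x)). unfold Rsqr in *; lra. }
  assert (E0 : E x0 = 0) by (unfold E; rewrite e1, e2, e3, e4; ring).
  assert (Ez : forall x, E x = 0).
  { intro x. destruct (Rtotal_order x x0) as [Hx|[Hx|Hx]].
    - (* x < x0 : G = E * exp (K y) nondecreasing *)
      destruct (MVT_cor2 (fun y => E y * exp (K * y)) (fun y => E' y * exp (K * y) + E y * (exp (K * y) * K)) x x0 Hx)
        as [cc [Hc1 Hc2]].
      { intros y Hy. apply (dpl_mul E (fun y => exp (K * y))); auto. apply dpl_expK. }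
      rewrite E0 in Hc1.
      assert (0 <= E' cc * exp (K * cc) + E cc * (exp (K * cc) * K)).
      { pose proof (exp_pos (K * cc)). destruct (KB cc). nra. }
      pose proof (exp_pos (K * x)). pose proof (Epos x). nra.
    - subst; auto.
    - destruct (MVT_cor2 (fun y => E y * exp (- K * y)) (fun y => E' y * exp (- K * y) + E y * (exp (- K * y) * - K)) x0 x Hx)
        as [cc [Hc1 Hc2]].
      { intros y Hy. apply (dpl_mul E (fun y => exp (- K * y))); auto. apply dpl_expK. }
      rewrite E0 in Hc1.
      assert (E' cc * exp (- K * cc) + E cc * (exp (- K * cc) * - K) <= 0).
      { pose proof (exp_pos (- K * cc)). destruct (KB cc). nra. }
      pose proof (exp_pos (- K * x)). pose proof (Epos x). nra. }
  intro x. specialize (Ez x). unfold E in Ez.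
  pose proof (Rle_0_sqr (z1 x)). pose proof (Rle_0_sqr (z1' x)).
  pose proof (Rle_0_sqr (z2 x)). pose proof (Rle_0_sqr (z2' x)). unfold Rsqr in *.
  split; nra.
Qed.


Lemma cont_right_le f x0 : continuity_pt f x0 -> (forall y, x0 < y -> f y <= 0) -> f x0 <= 0.
Proof.
  intros Hc H. destruct (Rle_or_lt (f x0) 0) as [?|Hp]; auto; exfalso.
  unfold continuity_pt, continue_in, limit1_in, limit_in in Hc.
  destruct (Hc (f x0) Hp) as [al [Hal Ha]].
  specialize (Ha (x0 + al / 2)). simpl in Ha. unfold R_dist, D_x, no_cond in Ha.
  assert (Hq : Rabs (f (x0 + al / 2) - f x0) < f x0).
  { apply Ha. split. split; auto. lra. rewrite Rabs_right; lra. }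
  apply Rabs_def2 in Hq. specialize (H (x0 + al/2) ltac:(lra)). lra.
Qed.

Lemma dpl_shift' f f1 x t : (forall y, derivable_pt_lim f y (f1 y)) ->
  derivable_pt_lim (fun s => f (x + s)) t (f1 (x + t)).
Proof.
  intro H.
  assert (H1 : derivable_pt_lim (fun s => x + s) t 1).
  { apply dpl_val with (0 + 1). apply dpl_add. apply derivable_pt_lim_const.
    apply derivable_pt_lim_id. ring. }
  apply dpl_val with (f1 (x + t) * 1).
  apply (derivable_pt_lim_comp (fun s => x + s) f t 1 (f1 (x+t))); auto.
  ring.
Qed.

Lemma Rabs_bnd x m : - m <= x <= m -> Rabs x <= m.
Proof. intros. apply Rabs_le; lra. Qed.

Set Implicit Arguments.
Record Hyp (c d r a b : R) (phi psi phi1 phi2 psi1 psi2 : R -> R) : Prop := {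
 hd : 0 < d; hr : 0 < r; ha : 0 < a; ha1 : a < 1; hb : 1 < b;
 hbnd : forall x, 0 <= phi x <= 1 /\ 0 <= psi x <= 1;
 hD1 : forall x, derivable_pt_lim phi x (phi1 x);
 hD2 : forall x, derivable_pt_lim phi1 x (phi2 x);
 hE1 : forall x, derivable_pt_lim psi x (psi1 x);
 hE2 : forall x, derivable_pt_lim psi1 x (psi2 x);
 heq1 : forall x, - phi2 x - c * phi1 x = phi x * (1 - phi x - a * psi x);
 heq2 : forall x, - d * psi2 x - c * psi1 x = r * psi x * (1 - psi x - b * phi x);
 hl1 : lim_minf phi 1; hl2 : lim_minf psi 0; hl3 : lim_pinf phi 0; hl4 : lim_pinf psi 1 }.
Unset Implicit Arguments.
Arguments hl1 {c d r a b phi psi phi1 phi2 psi1 psi2} _ eps.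
Arguments hl2 {c d r a b phi psi phi1 phi2 psi1 psi2} _ eps.
Arguments hl3 {c d r a b phi psi phi1 phi2 psi1 psi2} _ eps.
Arguments hl4 {c d r a b phi psi phi1 phi2 psi1 psi2} _ eps.

Lemma not_zero_fun f : lim_minf f 1 -> (forall x, f x = 0) -> False.
Proof.
  intros Hl H. destruct (Hl (1/2)) as [M HM]; [lra|].
  specialize (HM M (Rle_refl _)). rewrite H in HM. rewrite Rabs_left in HM; lra.
Qed.

Lemma not_zero_fun' f : lim_pinf f 1 -> (forall x, f x = 0) -> False.
Proof.
  intros Hl H. destruct (Hl (1/2)) as [M HM]; [lra|].
  specialize (HM M (Rle_refl _)). rewrite H in HM. rewrite Rabs_left in HM; lra.
Qed.

Lemma zero_d x : derivable_pt_lim (fun _ : R => 0) x ((fun _ : R => 0) x).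
Proof. apply derivable_pt_lim_const. Qed.

Lemma phi_pos c d r a b phi psi phi1 phi2 psi1 psi2 :
  Hyp c d r a b phi psi phi1 phi2 psi1 psi2 -> forall x, 0 < phi x.
Proof.
  intros H x0. pose proof (hbnd H) as B.
  destruct (B x0) as [[H0 _] _]. destruct H0 as [?|H0]; auto; exfalso.
  destruct (lmin_d2 phi phi1 (phi2 x0) x0 (x0 - 1) (x0 + 1) ltac:(lra)
    ltac:(intros x _; rewrite <- H0; apply B) ltac:(intros; apply (hD1 H)) (hD2 H x0)) as [e1 _].
  apply (not_zero_fun phi (hl1 H)). intro x.
  refine (proj1 (uniq2 phi phi1 phi2 (fun _ => 0) (fun _ => 0) (fun _ => 0) 1 1 (Rabs c + 2) x0
     ltac:(lra) ltac:(lra) (hD1 H) (hD2 H) zero_d zero_d _ _ (eq_sym H0) e1 eq_refl eq_refl x)).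
  - intro y. exists (- c), (- (1 - phi y - a * psi y)), 0, 0.
    pose proof (Rabs_pos c). pose proof (ha H). pose proof (ha1 H). destruct (B y) as [[] []].
    repeat split.
    + rewrite Rabs_Ropp; lra.
    + apply Rabs_bnd; nra.
    + rewrite Rabs_R0; lra.
    + rewrite Rabs_R0; lra.
    + pose proof (heq1 H y). lra.
  - intro y. exists 0, 0, 0, 0. pose proof (Rabs_pos c). rewrite Rabs_R0. repeat split; lra.
Qed.
Arguments phi_pos {c d r a b phi psi phi1 phi2 psi1 psi2}.

Lemma psi_pos c d r a b phi psi phi1 phi2 psi1 psi2 :
  Hyp c d r a b phi psi phi1 phi2 psi1 psi2 -> forall x, 0 < psi x.
Proof.
  intros H x0. pose proof (hbnd H) as B.
  destruct (B x0) as [_ [H0 _]]. destruct H0 as [?|H0]; auto; exfalso.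
  destruct (lmin_d2 psi psi1 (psi2 x0) x0 (x0 - 1) (x0 + 1) ltac:(lra)
    ltac:(intros x _; rewrite <- H0; apply B) ltac:(intros; apply (hE1 H)) (hE2 H x0)) as [e1 _].
  apply (not_zero_fun' psi (hl4 H)). intro x.
  refine (proj1 (uniq2 psi psi1 psi2 (fun _ => 0) (fun _ => 0) (fun _ => 0) (d) 1 (Rabs c + r * (1 + b)) x0
     (hd H) ltac:(lra) (hE1 H) (hE2 H) zero_d zero_d _ _ (eq_sym H0) e1 eq_refl eq_refl x)).
  - intro y. exists (- c), (- r * (1 - psi y - b * phi y)), 0, 0.
    pose proof (Rabs_pos c). pose proof (hr H). pose proof (hb H). destruct (B y) as [[] []].
    repeat split.
    + rewrite Rabs_Ropp; nra.
    + apply Rabs_bnd.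
      assert (0 <= r * psi y) by nra. assert (r * psi y <= r) by nra.
      assert (0 <= r * b * phi y) by (apply Rmult_le_pos; nra).
      assert (r * b * phi y <= r * b) by (assert (0 <= r * b) by nra; nra).
      split; nra.
    + rewrite Rabs_R0; nra.
    + rewrite Rabs_R0; nra.
    + pose proof (heq2 H y). lra.
  - intro y. exists 0, 0, 0, 0. pose proof (Rabs_pos c). pose proof (hr H). pose proof (hb H).
    rewrite Rabs_R0. repeat split; nra.
Qed.
Arguments psi_pos {c d r a b phi psi phi1 phi2 psi1 psi2}.

Lemma psi_lt1 c d r a b phi psi phi1 phi2 psi1 psi2 :
  Hyp c d r a b phi psi phi1 phi2 psi1 psi2 -> forall x, psi x < 1.
Proof.
  intros H x0. pose proof (hbnd H) as B.
  destruct (B x0) as [_ [_ H0]]. destruct H0 as [?|H0]; auto; exfalso.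
  destruct (lmax_d2 psi psi1 (psi2 x0) x0 (x0 - 1) (x0 + 1) ltac:(lra)
    ltac:(intros x _; rewrite H0; apply B) ltac:(intros; apply (hE1 H)) (hE2 H x0)) as [e1 e2].
  pose proof (heq2 H x0). rewrite H0, e1 in H1.
  pose proof (phi_pos H x0). pose proof (hd H). pose proof (hr H). pose proof (hb H).
  assert (0 < r * b * phi x0) by (repeat apply Rmult_lt_0_compat; lra). nra.
Qed.


Definition ord (phi psi : R -> R) t x := phi (x + t) <= phi x /\ psi x <= psi (x + t).

Lemma periodic f t : 0 < t -> (forall x, f (x + t) = f x) -> lim_minf f 1 -> lim_pinf f 0 -> False.
Proof.
  intros Ht Hp H1 H2.
  assert (Hn : forall n x, f (x + INR n * t) = f x).
  { induction n; intro x. simpl. rewrite Rmult_0_l, Rplus_0_r; auto.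
    rewrite S_INR. replace (x + (INR n + 1) * t) with ((x + INR n * t) + t) by ring.
    rewrite Hp; auto. }
  destruct (H1 (1/2)) as [M1 HM1]; [lra|]. destruct (H2 (1/2)) as [M2 HM2]; [lra|].
  destruct (INR_unbounded ((M2 - M1) / t)) as [n Hn'].
  assert (INR n * t > M2 - M1).
  { replace (M2 - M1) with ((M2 - M1) / t * t) by (field; lra).
    apply Rmult_lt_compat_r; lra. }
  specialize (HM1 M1 (Rle_refl _)). specialize (HM2 (M1 + INR n * t) ltac:(lra)).
  rewrite Hn in HM2. apply Rabs_def2 in HM1. apply Rabs_def2 in HM2. lra.
Qed.

Lemma touch c d r a b phi psi phi1 phi2 psi1 psi2 :
  Hyp c d r a b phi psi phi1 phi2 psi1 psi2 -> forall t x0, 0 < t ->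
  (forall x, ord phi psi t x) -> (phi (x0 + t) = phi x0 \/ psi x0 = psi (x0 + t)) -> False.
Proof.
  intros H t x0 Ht Ho Htouch.
  pose proof (hbnd H) as B. pose proof (phi_pos H) as Pp. pose proof (psi_pos H) as Qp.
  pose proof (ha H). pose proof (ha1 H). pose proof (hb H). pose proof (hr H). pose proof (hd H).
  set (z1 := fun x => phi (x + t) - phi x). set (z1' := fun x => phi1 (x + t) - phi1 x).
  set (z1'' := fun x => phi2 (x + t) - phi2 x).
  set (z2 := fun x => psi x - psi (x + t)). set (z2' := fun x => psi1 x - psi1 (x + t)).
  set (z2'' := fun x => psi2 x - psi2 (x + t)).
  assert (D1 : forall x, derivable_pt_lim z1 x (z1' x)).
  { intro x. apply dpl_sub. apply dpl_shift. apply (hD1 H). apply (hD1 H). }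
  assert (D1' : forall x, derivable_pt_lim z1' x (z1'' x)).
  { intro x. apply dpl_sub. apply dpl_shift. apply (hD2 H). apply (hD2 H). }
  assert (D2 : forall x, derivable_pt_lim z2 x (z2' x)).
  { intro x. apply dpl_sub. apply (hE1 H). apply dpl_shift. apply (hE1 H). }
  assert (D2' : forall x, derivable_pt_lim z2' x (z2'' x)).
  { intro x. apply dpl_sub. apply (hE2 H). apply dpl_shift. apply (hE2 H). }
  assert (Eq1 : forall x, z1'' x = - c * z1' x + (phi x + phi (x + t) - 1 + a * psi (x + t)) * z1 x
             + (- a * phi x) * z2 x).
  { intro x. unfold z1'', z1', z1, z2.
    assert (A1 : phi2 (x + t) = - c * phi1 (x + t) - phi (x + t) * (1 - phi (x + t) - a * psi (x + t)))
      by (pose proof (heq1 H (x + t)); lra).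
    assert (A2 : phi2 x = - c * phi1 x - phi x * (1 - phi x - a * psi x))
      by (pose proof (heq1 H x); lra).
    rewrite A1, A2. ring. }
  assert (Eq2 : forall x, d * z2'' x = - c * z2' x + (- r * b * psi x) * z1 x
             + (r * (psi x + psi (x + t) - 1 + b * phi (x + t))) * z2 x).
  { intro x. unfold z2'', z2', z1, z2.
    assert (A1 : d * psi2 (x + t) = - c * psi1 (x + t) - r * psi (x + t) * (1 - psi (x + t) - b * phi (x + t)))
      by (pose proof (heq2 H (x + t)); lra).
    assert (A2 : d * psi2 x = - c * psi1 x - r * psi x * (1 - psi x - b * phi x))
      by (pose proof (heq2 H x); lra).
    rewrite Rmult_minus_distr_l, A1, A2. ring. }
  assert (Z1 : forall x, z1 x <= 0) by (intro x; destruct (Ho x); unfold z1; lra).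
  assert (Z2 : forall x, z2 x <= 0) by (intro x; destruct (Ho x); unfold z2; lra).
  assert (All : z1 x0 = 0 /\ z1' x0 = 0 /\ z2 x0 = 0 /\ z2' x0 = 0).
  { assert (MX1 : z1 x0 = 0 -> z1' x0 = 0 /\ z1'' x0 <= 0).
    { intro e. apply (lmax_d2 z1 z1' (z1'' x0) x0 (x0 - 1) (x0 + 1)); auto. lra.
      intros x _. rewrite e. auto. }
    assert (MX2 : z2 x0 = 0 -> z2' x0 = 0 /\ z2'' x0 <= 0).
    { intro e. apply (lmax_d2 z2 z2' (z2'' x0) x0 (x0 - 1) (x0 + 1)); auto. lra.
      intros x _. rewrite e. auto. }
    destruct Htouch as [e|e].
    - assert (e1 : z1 x0 = 0) by (unfold z1; lra).
      destruct (MX1 e1) as [e2 e3].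
      rewrite Eq1, e1, e2 in e3.
      assert (0 < a * phi x0) by (apply Rmult_lt_0_compat; auto).
      specialize (Z2 x0).
      assert (e4 : z2 x0 = 0) by nra.
      destruct (MX2 e4). auto.
    - assert (e1 : z2 x0 = 0) by (unfold z2; lra).
      destruct (MX2 e1) as [e2 e3].
      assert (A3 : d * z2'' x0 <= 0) by nra.
      rewrite Eq2, e1, e2 in A3.
      assert (0 < r * b * psi x0) by (repeat apply Rmult_lt_0_compat; auto; lra).
      specialize (Z1 x0).
      assert (e4 : z1 x0 = 0) by nra.
      destruct (MX1 e4). auto. }
  destruct All as (e1 & e2 & e3 & e4).
  set (M := Rabs c + 3 + r * (1 + b)).
  assert (Mc : Rabs (- c) <= M) by (unfold M; rewrite Rabs_Ropp; nra).
  assert (M0 : Rabs 0 <= M) by (unfold M; rewrite Rabs_R0; pose proof (Rabs_pos c); nra).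
  assert (Uq := uniq2 z1 z1' z1'' z2 z2' z2'' 1 d M x0 ltac:(lra) ltac:(lra) D1 D1' D2 D2').
  apply (periodic phi t Ht); [| apply (hl1 H) | apply (hl3 H)].
  intro x. assert (Hz : z1 x = 0).
  { refine (proj1 (Uq _ _ e1 e2 e3 e4 x)).
    - intro y. exists (- c), (phi y + phi (y + t) - 1 + a * psi (y + t)), (- a * phi y), 0.
      destruct (B y) as [[] []]. destruct (B (y + t)) as [[] []].
      pose proof (Rabs_pos c).
      assert (0 <= a * psi (y + t) <= 1) by (split; nra).
      assert (0 <= a * phi y <= 1) by (split; nra).
      repeat split; auto.
      + apply Rabs_bnd; unfold M; split; nra.
      + apply Rabs_bnd; unfold M; split; nra.
      + rewrite Eq1; ring.
    - intro y. exists 0, (- r * b * psi y), (r * (psi y + psi (y + t) - 1 + b * phi (y + t))), (- c).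
      destruct (B y) as [[] []]. destruct (B (y + t)) as [[] []].
      pose proof (Rabs_pos c).
      assert (0 <= r * b * psi y <= r * b).
      { assert (0 < r * b) by nra. split; nra. }
      assert (0 <= b * phi (y + t) <= b) by (split; nra).
      assert (- r <= r * (psi y + psi (y + t) - 1 + b * phi (y + t)) <= r * (1 + b)) by (split; nra).
      repeat split; auto.
      + apply Rabs_bnd; unfold M; split; nra.
      + apply Rabs_bnd; unfold M; split; nra.
      + pose proof (Eq2 y). lra. }
  unfold z1 in Hz. lra.
Qed.
Arguments touch {c d r a b phi psi phi1 phi2 psi1 psi2}.


Lemma valley_free c d r a b phi psi phi1 phi2 psi1 psi2 :
  Hyp c d r a b phi psi phi1 phi2 psi1 psi2 -> forall X, (forall x, X <= x -> phi x < 1 - a) ->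
  forall p x y, X <= p -> p < x < y -> phi x < phi p -> phi x < phi y -> False.
Proof.
  intros H X HX p x y Hp Hxy H1 H2.
  destruct (continuity_ab_min phi p y ltac:(lra)) as [m [Hm1 Hm2]].
  { intros; apply dcont with (phi1 c0); apply (hD1 H). }
  assert (phi m <= phi x) by (apply Hm1; lra).
  assert (p < m < y).
  { destruct Hm2 as [[Ha|Ha] [Hb|Hb]]; try (split; lra); subst; lra. }
  destruct (lmin_d2 phi phi1 (phi2 m) m p y) as [e1 e2]; auto.
  { intros; apply Hm1; lra. } { intros; apply (hD1 H). } { apply (hD2 H). }
  pose proof (heq1 H m) as Q. rewrite e1 in Q.
  pose proof (phi_pos H m). pose proof (HX m ltac:(lra)). pose proof (hbnd H m).
  pose proof (ha H).
  assert (0 < 1 - phi m - a * psi m) by nra.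
  assert (0 < phi m * (1 - phi m - a * psi m)) by (apply Rmult_lt_0_compat; lra).
  lra.
Qed.
Arguments valley_free {c d r a b phi psi phi1 phi2 psi1 psi2}.

Lemma phi_mono c d r a b phi psi phi1 phi2 psi1 psi2 :
  Hyp c d r a b phi psi phi1 phi2 psi1 psi2 -> exists q, forall x y, q <= x -> x <= y -> phi y <= phi x.
Proof.
  intros H. pose proof (ha1 H).
  destruct (hl3 H (1 - a)) as [X HX]; [lra|].
  assert (HX' : forall x, X <= x -> phi x < 1 - a).
  { intros x Hx. specialize (HX x Hx). apply Rabs_def2 in HX. lra. }
  pose proof (phi_pos H X).
  destruct (hl3 H (phi X)) as [M HM]; [lra|].
  set (q := Rmax M (X + 1)).
  assert (Hq1 : M <= q) by apply Rmax_l. assert (Hq2 : X + 1 <= q) by apply Rmax_r.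
  assert (Hq : phi q < phi X) by (specialize (HM q Hq1); apply Rabs_def2 in HM; lra).
  exists q. intros x y Hx Hxy.
  destruct (Rle_or_lt (phi y) (phi x)) as [?|Hc]; auto; exfalso.
  destruct Hxy as [Hxy|<-]; [|lra].
  destruct (Rlt_or_le (phi x) (phi X)).
  - apply (valley_free H X HX' X x y); auto; lra.
  - assert (q < x) by (destruct Hx as [?|<-]; auto; lra).
    apply (valley_free H X HX' X q x); auto; lra.
Qed.
Arguments phi_mono {c d r a b phi psi phi1 phi2 psi1 psi2}.

Lemma peak_free c d r a b phi psi phi1 phi2 psi1 psi2 :
  Hyp c d r a b phi psi phi1 phi2 psi1 psi2 -> forall X, (forall x, x <= X -> 1 < b * phi x) ->
  forall p x y, y <= X -> p < x < y -> psi p < psi x -> psi y < psi x -> False.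
Proof.
  intros H X HX p x y Hp Hxy H1 H2.
  destruct (continuity_ab_maj psi p y ltac:(lra)) as [m [Hm1 Hm2]].
  { intros; apply dcont with (psi1 c0); apply (hE1 H). }
  assert (psi x <= psi m) by (apply Hm1; lra).
  assert (p < m < y).
  { destruct Hm2 as [[Ha|Ha] [Hb|Hb]]; try (split; lra); subst; lra. }
  destruct (lmax_d2 psi psi1 (psi2 m) m p y) as [e1 e2]; auto.
  { intros; apply Hm1; lra. } { intros; apply (hE1 H). } { apply (hE2 H). }
  pose proof (heq2 H m) as Q. rewrite e1 in Q.
  pose proof (psi_pos H m). pose proof (HX m ltac:(lra)). pose proof (hbnd H m).
  pose proof (hr H). pose proof (hd H).
  assert (1 - psi m - b * phi m < 0) by nra.
  assert (0 < r * psi m) by (apply Rmult_lt_0_compat; lra).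
  assert (r * psi m * (1 - psi m - b * phi m) < 0) by nra.
  nra.
Qed.
Arguments peak_free {c d r a b phi psi phi1 phi2 psi1 psi2}.

Lemma psi_mono c d r a b phi psi phi1 phi2 psi1 psi2 :
  Hyp c d r a b phi psi phi1 phi2 psi1 psi2 -> exists X, (forall x, x <= X -> 1/2 < phi x) /\
    forall x y, x <= y -> y <= X -> psi x <= psi y.
Proof.
  intros H. pose proof (hb H).
  destruct (hl1 H ((b - 1) / (2 * b))) as [X HX].
  { apply Rdiv_lt_0_compat; lra. }
  assert (HX' : forall x, x <= X -> 1/2 < phi x /\ 1 < b * phi x).
  { intros x Hx. specialize (HX x Hx). apply Rabs_def2 in HX. destruct HX as [_ HX].
    assert (E : 1 - (b - 1) / (2 * b) = (b + 1) / (2 * b)) by (field; lra).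
    assert (phi x > (b + 1) / (2 * b)) by lra.
    assert (b * phi x > b * ((b + 1) / (2 * b))) by (apply Rmult_lt_compat_l; lra).
    replace (b * ((b + 1) / (2 * b))) with ((b + 1) / 2) in H2 by (field; lra).
    split; [|lra].
    assert ((b + 1) / (2 * b) > 1/2).
    { apply Rmult_gt_reg_l with (2 * b); [lra|].
      replace (2 * b * ((b + 1) / (2 * b))) with (b + 1) by (field; lra). lra. }
    lra. }
  exists X. split; [intros; apply HX'; auto|].
  intros x y Hxy HyX.
  destruct (Rle_or_lt (psi x) (psi y)) as [?|Hc]; auto; exfalso.
  destruct Hxy as [Hxy|<-]; [|lra].
  pose proof (psi_pos H y).
  destruct (hl2 H (psi y)) as [M HM]; [lra|].
  set (p := Rmin M (x - 1)).
  assert (p <= M) by apply Rmin_l. assert (p <= x - 1) by apply Rmin_r.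
  assert (psi p < psi y) by (specialize (HM p ltac:(lra)); apply Rabs_def2 in HM; lra).
  apply (peak_free H X (fun z Hz => proj2 (HX' z Hz)) p x y); auto; lra.
Qed.
Arguments psi_mono {c d r a b phi psi phi1 phi2 psi1 psi2}.

Lemma tails c d r a b phi psi phi1 phi2 psi1 psi2 :
  Hyp c d r a b phi psi phi1 phi2 psi1 psi2 -> exists N' N, N' < N /\
   (forall x, x <= N' -> 1/2 < phi x) /\ (forall x y, x <= N' -> x <= y -> psi x <= psi y) /\
   (forall x, N <= x -> 3/4 < psi x) /\ (forall x y, N <= x -> x <= y -> phi y <= phi x).
Proof.
  intros H.
  destruct (phi_mono H) as [q Hq].
  destruct (hl4 H (1/4)) as [X2 HX2]; [lra|].
  assert (HX2' : forall x, X2 <= x -> 3/4 < psi x).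
  { intros x Hx; specialize (HX2 x Hx); apply Rabs_def2 in HX2; lra. }
  destruct (psi_mono H) as [X' [HX'1 HX'2]].
  set (B := Rmax X' X2).
  destruct (continuity_ab_min psi X' B) as [m0 [Hm1 Hm2]].
  { apply Rmax_l. } { intros; apply dcont with (psi1 c0); apply (hE1 H). }
  pose proof (psi_pos H m0).
  set (del := Rmin (psi m0) (3/4)).
  assert (Hdel : 0 < del) by (apply Rmin_pos; lra).
  assert (Hlow : forall y, X' <= y -> del <= psi y).
  { intros y Hy. destruct (Rle_or_lt y B).
    - apply Rle_trans with (psi m0); [apply Rmin_l|]. apply Hm1; lra.
    - apply Rle_trans with (3/4); [apply Rmin_r|]. left; apply HX2'.
      pose proof (Rmax_r X' X2) as HB. fold B in HB. lra. }
  destruct (hl2 H del Hdel) as [M' HM'].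
  set (N := Rmax q X2).
  assert (q <= N) by apply Rmax_l. assert (X2 <= N) by apply Rmax_r.
  set (N' := Rmin (Rmin M' X') (N - 1)).
  assert (N' <= Rmin M' X') by apply Rmin_l. assert (N' <= N - 1) by apply Rmin_r.
  assert (Rmin M' X' <= M') by apply Rmin_l. assert (Rmin M' X' <= X') by apply Rmin_r.
  exists N', N. repeat split.
  - lra.
  - intros; apply HX'1; lra.
  - intros x y Hx Hxy. destruct (Rle_or_lt y X').
    + apply HX'2; auto.
    + specialize (HM' x ltac:(lra)). apply Rabs_def2 in HM'. specialize (Hlow y ltac:(lra)). lra.
  - intros; apply HX2'; lra.
  - intros; apply Hq; lra.
Qed.
Arguments tails {c d r a b phi psi phi1 phi2 psi1 psi2}.


Lemma eqz1 c d r a b phi psi phi1 phi2 psi1 psi2 :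
  Hyp c d r a b phi psi phi1 phi2 psi1 psi2 -> forall t x,
  phi2 (x + t) - phi2 x = - c * (phi1 (x + t) - phi1 x)
    + phi x * (1 - phi x - a * psi x) - phi (x + t) * (1 - phi (x + t) - a * psi (x + t)).
Proof. intros H t x. pose proof (heq1 H x). pose proof (heq1 H (x + t)). lra. Qed.
Arguments eqz1 {c d r a b phi psi phi1 phi2 psi1 psi2}.

Lemma eqz2 c d r a b phi psi phi1 phi2 psi1 psi2 :
  Hyp c d r a b phi psi phi1 phi2 psi1 psi2 -> forall t x,
  d * (psi2 x - psi2 (x + t)) = - c * (psi1 x - psi1 (x + t))
    + r * psi (x + t) * (1 - psi (x + t) - b * phi (x + t)) - r * psi x * (1 - psi x - b * phi x).
Proof. intros H t x. pose proof (heq2 H x). pose proof (heq2 H (x + t)). lra. Qed.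
Arguments eqz2 {c d r a b phi psi phi1 phi2 psi1 psi2}.

Lemma RT c d r a b phi psi phi1 phi2 psi1 psi2 :
  Hyp c d r a b phi psi phi1 phi2 psi1 psi2 -> forall N,
  (forall x, N <= x -> 3/4 < psi x) -> (forall x y, N <= x -> x <= y -> phi y <= phi x) ->
  forall t, 0 <= t -> psi N <= psi (N + t) -> forall x, N <= x -> psi x <= psi (x + t).
Proof.
  intros H N HN1 HN2 t Ht HNt x1 Hx1.
  destruct (Rle_or_lt (psi x1) (psi (x1 + t))) as [?|Hc]; auto; exfalso.
  set (z2 := fun y => psi y - psi (y + t)).
  set (z2' := fun y => psi1 y - psi1 (y + t)).
  assert (D2 : forall y, derivable_pt_lim z2 y (z2' y)).
  { intro y. apply dpl_sub. apply (hE1 H). apply dpl_shift. apply (hE1 H). }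
  assert (D2' : derivable_pt_lim z2' x1 (psi2 x1 - psi2 (x1 + t))) by
   (apply dpl_sub; [apply (hE2 H)|apply dpl_shift; apply (hE2 H)]).
  assert (Hz1 : 0 < z2 x1) by (unfold z2; lra).
  destruct (hl4 H (z2 x1 / 2)) as [M HM]; [lra|].
  set (B := Rmax M (x1 + 1)).
  assert (M <= B) by apply Rmax_l. assert (x1 + 1 <= B) by apply Rmax_r.
  assert (HB : z2 B < z2 x1).
  { pose proof (HM B ltac:(lra)). pose proof (HM (B + t) ltac:(lra)).
    apply Rabs_def2 in H2. apply Rabs_def2 in H3. unfold z2 at 1. lra. }
  destruct (continuity_ab_maj z2 N B) as [x0 [Hm1 Hm2]]; [lra| |].
  { intros; apply dcont with (z2' c0); auto. }
  assert (z2 x1 <= z2 x0) by (apply Hm1; lra).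
  assert (HN : z2 N <= 0) by (unfold z2; lra).
  assert (N < x0 < B) by (destruct Hm2 as [[Ha|Ha] [Hb|Hb]]; try (split; lra); subst; lra).
  assert (D2'' : derivable_pt_lim z2' x0 (psi2 x0 - psi2 (x0 + t))) by
   (apply dpl_sub; [apply (hE2 H)|apply dpl_shift; apply (hE2 H)]).
  destruct (lmax_d2 z2 z2' _ x0 N B H3 ltac:(intros; apply Hm1; lra) ltac:(intros; auto) D2'')
    as [e1 e2].
  pose proof (eqz2 H t x0) as Q. unfold z2' in e1. rewrite e1 in Q.
  pose proof (hd H). pose proof (hr H). pose proof (hb H).
  assert (d * (psi2 x0 - psi2 (x0 + t)) <= 0) by nra.
  pose proof (hbnd H x0). pose proof (hbnd H (x0 + t)).
  pose proof (HN1 x0 ltac:(lra)). pose proof (HN1 (x0 + t) ltac:(lra)).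
  pose proof (HN2 x0 (x0 + t) ltac:(lra) ltac:(lra)).
  assert (Hz0 : psi (x0 + t) < psi x0) by (unfold z2 in *; lra).
  assert (P1 : 0 < (psi (x0 + t) - psi x0) * (1 - psi (x0 + t) - psi x0)) by nra.
  assert (P2 : 0 <= psi x0 * phi x0 - psi (x0 + t) * phi (x0 + t)) by nra.
  assert (P3 : 0 <= b * (psi x0 * phi x0 - psi (x0 + t) * phi (x0 + t))) by nra.
  assert (0 < r * ((psi (x0 + t) - psi x0) * (1 - psi (x0 + t) - psi x0)
              + b * (psi x0 * phi x0 - psi (x0 + t) * phi (x0 + t)))) by nra.
  assert (E : r * psi (x0 + t) * (1 - psi (x0 + t) - b * phi (x0 + t)) - r * psi x0 * (1 - psi x0 - b * phi x0)
    = r * ((psi (x0 + t) - psi x0) * (1 - psi (x0 + t) - psi x0)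
              + b * (psi x0 * phi x0 - psi (x0 + t) * phi (x0 + t)))) by ring.
  lra.
Qed.
Arguments RT {c d r a b phi psi phi1 phi2 psi1 psi2}.

Lemma LT c d r a b phi psi phi1 phi2 psi1 psi2 :
  Hyp c d r a b phi psi phi1 phi2 psi1 psi2 -> forall N',
  (forall x, x <= N' -> 1/2 < phi x) -> (forall x y, x <= N' -> x <= y -> psi x <= psi y) ->
  forall t, 0 <= t -> phi (N' + t) <= phi N' -> forall x, x <= N' -> phi (x + t) <= phi x.
Proof.
  intros H N HN1 HN2 t Ht HNt x1 Hx1.
  destruct (Rle_or_lt (phi (x1 + t)) (phi x1)) as [?|Hc]; auto; exfalso.
  set (z1 := fun y => phi (y + t) - phi y).
  set (z1' := fun y => phi1 (y + t) - phi1 y).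
  assert (D1 : forall y, derivable_pt_lim z1 y (z1' y)).
  { intro y. apply dpl_sub. apply dpl_shift. apply (hD1 H). apply (hD1 H). }
  assert (Hz1 : 0 < z1 x1) by (unfold z1; lra).
  destruct (hl1 H (z1 x1 / 2)) as [M HM]; [lra|].
  set (B := Rmin (M - t) (x1 - 1)).
  assert (B <= M - t) by apply Rmin_l. assert (B <= x1 - 1) by apply Rmin_r.
  assert (HB : z1 B < z1 x1).
  { pose proof (HM B ltac:(lra)). pose proof (HM (B + t) ltac:(lra)).
    apply Rabs_def2 in H2. apply Rabs_def2 in H3. unfold z1 at 1. lra. }
  destruct (continuity_ab_maj z1 B N) as [x0 [Hm1 Hm2]]; [lra| |].
  { intros; apply dcont with (z1' c0); auto. }
  assert (z1 x1 <= z1 x0) by (apply Hm1; lra).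
  assert (HN : z1 N <= 0) by (unfold z1; lra).
  assert (B < x0 < N) by (destruct Hm2 as [[Ha|Ha] [Hb|Hb]]; try (split; lra); subst; lra).
  assert (D1'' : derivable_pt_lim z1' x0 (phi2 (x0 + t) - phi2 x0)) by
   (apply dpl_sub; [apply dpl_shift; apply (hD2 H)|apply (hD2 H)]).
  destruct (lmax_d2 z1 z1' _ x0 B N H3 ltac:(intros; apply Hm1; lra) ltac:(intros; auto) D1'')
    as [e1 e2].
  pose proof (eqz1 H t x0) as Q. unfold z1' in e1. rewrite e1 in Q.
  pose proof (ha H).
  pose proof (hbnd H x0). pose proof (hbnd H (x0 + t)).
  pose proof (HN1 x0 ltac:(lra)).
  pose proof (HN2 x0 (x0 + t) ltac:(lra) ltac:(lra)).
  assert (Hz0 : phi x0 < phi (x0 + t)) by (unfold z1 in *; lra).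
  assert (P1 : 0 < (phi x0 - phi (x0 + t)) * (1 - phi x0 - phi (x0 + t))) by nra.
  assert (P2 : 0 <= phi (x0 + t) * psi (x0 + t) - phi x0 * psi x0) by nra.
  assert (P3 : 0 <= a * (phi (x0 + t) * psi (x0 + t) - phi x0 * psi x0)) by nra.
  assert (E : phi x0 * (1 - phi x0 - a * psi x0) - phi (x0 + t) * (1 - phi (x0 + t) - a * psi (x0 + t))
    = (phi x0 - phi (x0 + t)) * (1 - phi x0 - phi (x0 + t)) + a * (phi (x0 + t) * psi (x0 + t) - phi x0 * psi x0)) by ring.
  lra.
Qed.
Arguments LT {c d r a b phi psi phi1 phi2 psi1 psi2}.

Arguments psi_lt1 {c d r a b phi psi phi1 phi2 psi1 psi2}.

Lemma Rabs_le_inv_tmp x m : Rabs x <= m -> - m <= x <= m.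
Proof. intro h. unfold Rabs in h. destruct (Rcase_abs x); split; lra. Qed.

Lemma all_ord c d r a b phi psi phi1 phi2 psi1 psi2 :
  Hyp c d r a b phi psi phi1 phi2 psi1 psi2 -> forall t, 0 < t -> forall x, ord phi psi t x.
Proof.
  intros H.
  destruct (tails H) as (N' & N & HNN & T1 & T2 & T3 & T4).
  assert (Ext : forall t, 0 <= t -> (forall x, N' <= x <= N -> ord phi psi t x) -> forall x, ord phi psi t x).
  { intros t Ht Hc x. destruct (Rle_or_lt N x).
    - split. apply T4; lra.
      apply (RT H N T3 T4 t Ht); auto. apply (Hc N); lra.
    - destruct (Rle_or_lt x N').
      + split. apply (LT H N' T1 T2 t Ht); auto. apply (Hc N'); lra.
        apply T2; lra.
      + apply Hc; lra. }
  assert (St1 : exists T, 0 <= T /\ forall t, T <= t -> forall x, ord phi psi t x).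
  { destruct (continuity_ab_min phi N' N) as [m1 [Hm1 _]]; [lra| |].
    { intros; apply dcont with (phi1 c0); apply (hD1 H). }
    destruct (continuity_ab_min (fun y => 1 - psi y) N' N) as [m2 [Hm2 _]]; [lra| |].
    { intros. apply dcont with (0 - psi1 c0). apply dpl_sub. apply derivable_pt_lim_const. apply (hE1 H). }
    pose proof (phi_pos H m1). pose proof (psi_lt1 H m2).
    destruct (hl3 H (phi m1)) as [M1 HM1]; [lra|].
    destruct (hl4 H (1 - psi m2)) as [M2 HM2]; [lra|].
    exists (Rmax 0 (Rmax M1 M2 - N')). split; [apply Rmax_l|].
    intros t Ht. pose proof (Rmax_l 0 (Rmax M1 M2 - N')). pose proof (Rmax_r 0 (Rmax M1 M2 - N')).
    pose proof (Rmax_l M1 M2). pose proof (Rmax_r M1 M2).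
    apply Ext; [lra|]. intros x Hx.
    specialize (HM1 (x + t) ltac:(lra)). specialize (HM2 (x + t) ltac:(lra)).
    apply Rabs_def2 in HM1. apply Rabs_def2 in HM2.
    specialize (Hm1 x Hx). specialize (Hm2 x Hx). simpl in Hm2.
    split; lra. }
  destruct St1 as [T [HT0 HT]].
  set (S := fun t => 0 <= t /\ forall s, t <= s -> forall x, ord phi psi s x).
  destruct (completeness (fun y => S (- y))) as [L [HL1 HL2]].
  { exists 0. intros y [Hy _]. lra. }
  { exists (- T). split. rewrite Ropp_involutive; auto. intros s Hs. rewrite Ropp_involutive in Hs. auto. }
  set (ts := - L).
  assert (Hlow : forall t, S t -> ts <= t).
  { intros t Hs. assert (- t <= L). apply HL1. rewrite Ropp_involutive; auto. unfold ts; lra. }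
  assert (Hts0 : 0 <= ts).
  { assert (L <= 0). apply HL2. intros y [Hy _]. lra. unfold ts; lra. }
  assert (A : forall s, ts < s -> forall x, ord phi psi s x).
  { intros s Hs. destruct (classic (exists t, S t /\ t < s)) as [[t [[_ Ht] Hts]]|Hn].
    - apply Ht; lra.
    - exfalso. assert (L <= - s).
      { apply HL2. intros y Hy. destruct (Rle_or_lt y (- s)); auto. exfalso. apply Hn.
        exists (- y). split; auto. lra. }
      unfold ts in Hs; lra. }
  assert (Bo : forall x, ord phi psi ts x).
  { intro x. split.
    - assert (phi (x + ts) - phi x <= 0); [|lra].
      apply (cont_right_le (fun u => phi (x + u) - phi x)).
      + apply dcont with (phi1 (x + ts) - 0). apply dpl_sub. apply dpl_shift'. apply (hD1 H).
        apply derivable_pt_lim_const.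
      + intros y Hy. destruct (A y Hy x). lra.
    - assert (psi x - psi (x + ts) <= 0); [|lra].
      apply (cont_right_le (fun u => psi x - psi (x + u))).
      + apply dcont with (0 - psi1 (x + ts)). apply dpl_sub. apply derivable_pt_lim_const.
        apply dpl_shift'. apply (hE1 H).
      + intros y Hy. destruct (A y Hy x). lra. }
  assert (Z : ts = 0).
  { destruct Hts0 as [Hp|]; auto. exfalso.
    assert (Str : forall x, phi (x + ts) < phi x /\ psi x < psi (x + ts)).
    { intro x. destruct (Bo x) as [B1 B2]. split.
      - destruct B1; auto. exfalso. apply (touch H ts x Hp Bo). left; auto.
      - destruct B2; auto. exfalso. apply (touch H ts x Hp Bo). right; auto. }
    destruct (continuity_ab_min (fun x => phi x - phi (x + ts)) N' N) as [m1 [Hm1 _]]; [lra| |].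
    { intros. apply dcont with (phi1 c0 - phi1 (c0 + ts)). apply dpl_sub. apply (hD1 H).
      apply dpl_shift. apply (hD1 H). }
    destruct (continuity_ab_min (fun x => psi (x + ts) - psi x) N' N) as [m2 [Hm2 _]]; [lra| |].
    { intros. apply dcont with (psi1 (c0 + ts) - psi1 c0). apply dpl_sub.
      apply dpl_shift. apply (hE1 H). apply (hE1 H). }
    simpl in Hm1, Hm2.
    set (e1 := phi m1 - phi (m1 + ts)). set (e2 := psi (m2 + ts) - psi m2).
    assert (He1 : 0 < e1) by (destruct (Str m1); unfold e1; lra).
    assert (He2 : 0 < e2) by (destruct (Str m2); unfold e2; lra).
    destruct (continuity_ab_maj (fun y => Rabs (phi1 y)) N' (N + ts)) as [k1 [Hk1 _]]; [lra| |].
    { intros. apply (continuity_pt_comp phi1 Rabs). apply dcont with (phi2 c0). apply (hD2 H).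
      apply Rcontinuity_abs. }
    destruct (continuity_ab_maj (fun y => Rabs (psi1 y)) N' (N + ts)) as [k2 [Hk2 _]]; [lra| |].
    { intros. apply (continuity_pt_comp psi1 Rabs). apply dcont with (psi2 c0). apply (hE2 H).
      apply Rcontinuity_abs. }
    set (L1 := Rabs (phi1 k1)). set (L2 := Rabs (psi1 k2)).
    assert (0 <= L1) by apply Rabs_pos. assert (0 <= L2) by apply Rabs_pos.
    set (eps := Rmin (ts / 2) (Rmin (e1 / (L1 + 1)) (e2 / (L2 + 1)))).
    assert (Heps0 : 0 < eps).
    { apply Rmin_pos. lra. apply Rmin_pos; apply Rdiv_lt_0_compat; lra. }
    assert (Heps1 : eps <= ts / 2) by apply Rmin_l.
    assert (Heps2 : (L1 + 1) * eps <= e1).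
    { assert (eps <= e1 / (L1 + 1)) by (eapply Rle_trans; [apply Rmin_r|apply Rmin_l]).
      apply Rmult_le_compat_l with (r := L1 + 1) in H2; [|lra].
      replace ((L1 + 1) * (e1 / (L1 + 1))) with e1 in H2 by (field; lra). auto. }
    assert (Heps3 : (L2 + 1) * eps <= e2).
    { assert (eps <= e2 / (L2 + 1)) by (eapply Rle_trans; [apply Rmin_r|apply Rmin_r]).
      apply Rmult_le_compat_l with (r := L2 + 1) in H2; [|lra].
      replace ((L2 + 1) * (e2 / (L2 + 1))) with e2 in H2 by (field; lra). auto. }
    assert (Cl : forall s, ts - eps <= s <= ts -> forall x, ord phi psi s x).
    { intros s Hs. destruct (Req_dec s ts) as [->|Hne]; auto.
      apply Ext; [lra|]. intros x Hx.
      destruct (MVT_cor2 phi phi1 (x + s) (x + ts)) as [cc [Hc1 Hc2]]; [lra| |].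
      { intros; apply (hD1 H). }
      destruct (MVT_cor2 psi psi1 (x + s) (x + ts)) as [dd [Hd1 Hd2]]; [lra| |].
      { intros; apply (hE1 H). }
      assert (Rabs (phi1 cc) <= L1) by (apply Hk1; lra).
      assert (Rabs (psi1 dd) <= L2) by (apply Hk2; lra).
      apply Rabs_le_inv_tmp in H2. apply Rabs_le_inv_tmp in H3.
      assert (- L1 * (ts - s) <= phi1 cc * (ts - s) <= L1 * (ts - s)) by (split; nra).
      assert (- L2 * (ts - s) <= psi1 dd * (ts - s) <= L2 * (ts - s)) by (split; nra).
      assert (L1 * (ts - s) <= L1 * eps) by nra.
      assert (L2 * (ts - s) <= L2 * eps) by nra.
      specialize (Hm1 x Hx). specialize (Hm2 x Hx). fold e1 in Hm1. fold e2 in Hm2.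
      split; nra. }
    assert (Sin : S (ts - eps)).
    { split; [lra|]. intros s Hs. destruct (Rle_or_lt s ts).
      - apply Cl; lra.
      - apply A; auto. }
    specialize (Hlow _ Sin). lra. }
  intros t Ht. apply A. lra.
Qed.
Arguments all_ord {c d r a b phi psi phi1 phi2 psi1 psi2}.

Theorem propositionA4 (c d r a b : R) (phi psi : R -> R) :
  in_E c d r a b ->
  tw_profile c d r a b phi psi ->
  forall x1 x2, x1 < x2 -> phi x2 < phi x1 /\ psi x1 < psi x2.
Proof.
  intros [[Hd [Hr [Ha Hb]]] _] [Hbnd [phi1 [phi2 [psi1 [psi2
    [[D1 [D2 _]] [[E1 [E2 _]] [Q1 [Q2 [L1 [L2 [L3 L4]]]]]]]]]]]] x1 x2 Hx.
  assert (H : Hyp c d r a b phi psi phi1 phi2 psi1 psi2) by (constructor; auto; lra).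
  pose proof (all_ord H (x2 - x1) ltac:(lra) x1) as [O1 O2].
  replace (x1 + (x2 - x1)) with x2 in O1, O2 by ring.
  split.
  - destruct O1; auto. exfalso. apply (touch H (x2 - x1) x1 ltac:(lra) (all_ord H (x2 - x1) ltac:(lra))).
    left. replace (x1 + (x2 - x1)) with x2 by ring. auto.
  - destruct O2; auto. exfalso. apply (touch H (x2 - x1) x1 ltac:(lra) (all_ord H (x2 - x1) ltac:(lra))).
    right. replace (x1 + (x2 - x1)) with x2 by ring. auto.
Qed.
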